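(* Let $n\ge 2$ and let $H=\langle h\rangle$ be a cyclic group of order $n$. Let $G=H\times H$, and regard the first factor $H\times\{e\}$ as ''$H$'' and the second factor $\{e\}\times H$ as ''$P$'' (so $P=\langle g\rangle$ with $g=(e,h)$ and $m=n$). Let $a,b\in\{0,1,\dots,n-1\}$ and put $\ell=|a-b|$. Define $$R=\{(h^a,x): x\in H,\ x\neq h^b\}\ \cup\ \{(x,h^b): x\in H,\ x\neq h^b\}\subseteq G .$$ If $\ell\neq 0$, then $R$ is an $\ell$-$(n,n,2n-2,n-2,n,n-2,2,1)$-partial direct product difference set in $G$ relative to the two factors. If $\ell=0$, then $R$ is an $(n,n,2n-2,n-2,n-2,2)$-direct product difference set in $G$ relative to the two factors.
   Context: Group ring notation: for a finite group $G$ and a subset $X\subseteq G$, write $X$ also for the element $\sum_{x\in X}x$ of the integral group ring $\mathbb Z[G]$, and $X^{(-1)}=\sum_{x\in X}x^{-1}$. Let $G=H\times P$ with $H=\langle h\rangle$ cyclic of order $n$ and $P=\langle g\rangle$ cyclic of order $m$, identifying $H$ with $H\times\{e_P\}$ and $P$ with $\{e_H\}\times P$; let $e$ be the identity of $G$. (1) Partial direct product difference set (PDPDS): let $\ell$ be an integer with $h^\ell\neq e_H$. A subset $R\subseteq G$ with $|R|=k$ is an $\ell$-$(n,m,k,\lambda_1,\lambda_2,\lambda_3,\mu_1,\mu_2)$-PDPDS in $G$ relative to $H$ and $P$ if in $\mathbb Z[G]$ $$RR^{(-1)}=(k-\lambda_1-\lambda_2+\mu_1)e+(\lambda_1-\mu_1)H+(\lambda_2-\mu_1)P+\mu_1G+(\lambda_3-\lambda_1)(h^\ell+h^{n-\ell})+(\mu_2-\mu_1)(h^\ell+h^{n-\ell})(g+g^2+\dots+g^{m-1}).$$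 (When $h^\ell\ne h^{n-\ell}$ this says: the quotients $r_1r_2^{-1}$, $r_1\neq r_2\in R$, represent every element of $H\setminus\{h^\ell,h^{n-\ell},e_H\}$ exactly $\lambda_1$ times, every non-identity element of $P$ exactly $\lambda_2$ times, each of $h^\ell,h^{n-\ell}$ exactly $\lambda_3$ times, every element of $(H\setminus\{h^\ell,h^{n-\ell},e_H\})\times(P\setminus\{e_P\})$ exactly $\mu_1$ times, and every element of $\{h^\ell,h^{n-\ell}\}\times(P\setminus\{e_P\})$ exactly $\mu_2$ times.) (2) Direct product difference set (DPDS): a subset $R\subseteq G$ with $|R|=k$ is an $(n,m,k,\lambda_1,\lambda_2,\mu)$-DPDS in $G$ relative to $H$ and $P$ if the quotients $r_1r_2^{-1}$, $r_1\ne r_2\in R$, represent every non-identity element of $H$ exactly $\lambda_1$ times, every non-identity element of $P$ exactly $\lambda_2$ times, and every element of $(H\setminus\{e_H\})\times(P\setminus\{e_P\})$ exactly $\mu$ times (and no other elements). *)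

(* Defs.v *)
From HB Require Import structures.
From mathcomp Require Import all_boot all_order all_algebra all_fingroup.
Set Implicit Arguments.
Unset Strict Implicit.
Unset Printing Implicit Defensive.
Import GRing.Theory.
Local Open Scope group_scope.

(* G = H x P is modelled inside the external direct product group gT1 * gT2,
   with H = <[h]> x 1 and P = 1 x <[g]>. *)

Section Defs.
Variables gT1 gT2 : finGroupType.

(* coefficient of z in R R^(-1) in the integral group ring *)
Definition rrinv_coef (R : {set gT1 * gT2}) (z : gT1 * gT2) : nat :=
  #|[set p in setX R R | p.1 * p.2^-1 == z]|.

Definition diff_count (R : {set gT1 * gT2}) (z : gT1 * gT2) : nat :=
  #|[set p in setX R R | (p.1 != p.2) && (p.1 * p.2^-1 == z)]|.

Definition b2z (b : bool) : int := (nat_of_bool b)%:Z.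

(* Partial direct product difference set; the integer l of the paper is taken
   as a natural number ell, h^l = h ^+ ell and h^(n-l) = (h ^+ ell)^-1. *)
Definition is_PDPDS (h : gT1) (g : gT2) (n m ell : nat) (R : {set gT1 * gT2})
    (k l1 l2 l3 mu1 mu2 : int) : Prop :=
  [/\ #[h] = n /\ #[g] = m, h ^+ ell != 1,
      R \subset setX <[h]> <[g]>,
      (#|R| : int) = k &
      forall z, z \in setX <[h]> <[g]> ->
        ((rrinv_coef R z : int) =
           (k - l1 - l2 + mu1) * b2z (z == 1%g)
         + (l1 - mu1) * b2z (z \in setX <[h]> 1%g)
         + (l2 - mu1) * b2z (z \in setX 1%g <[g]>)
         + mu1 * b2z (z \in setX <[h]> <[g]>)
         + (l3 - l1) * (b2z (z == (h ^+ ell, 1)%g) + b2z (z == ((h ^+ ell)^-1, 1)%g))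
         + (mu2 - mu1) * (\sum_(1 <= j < m)
              (b2z (z == (h ^+ ell, g ^+ j)%g) + b2z (z == ((h ^+ ell)^-1, g ^+ j)%g))))%R].

Definition is_DPDS (h : gT1) (g : gT2) (n m : nat) (R : {set gT1 * gT2})
    (k l1 l2 mu : nat) : Prop :=
  [/\ #[h] = n /\ #[g] = m,
      R \subset setX <[h]> <[g]>,
      #|R| = k &
      forall z, z \in setX <[h]> <[g]> -> z != 1 ->
        diff_count R z =
          (if z.2 == 1 then l1 else if z.1 == 1 then l2 else mu)].
End Defs.

Definition natdist (a b : nat) : nat := (a - b) + (b - a).

(* Main.v *)
Require Import Defs.
From HB Require Import structures.
From mathcomp Require Import all_boot all_order all_algebra all_fingroup.
From mathcomp Require Import cyclic.
From mathcomp Require Import zify.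
Import GRing.Theory.
Local Open Scope group_scope.

Lemma rrinv_coefE (gT : finGroupType) (R : {set gT * gT}) z :
  rrinv_coef R z = #|[set r in R | z * r \in R]|.
Proof.
have inj : injective (fun r : gT * gT => (z * r, r)) by move=> r s [_].
rewrite /rrinv_coef -[RHS](card_imset _ inj); apply: eq_card => -[p1 p2].
rewrite !inE /=; apply/andP/imsetP.
- case=> /andP[H1 H2] /eqP E; exists p2; first by rewrite inE H2 -E mulgVK H1.
  by rewrite -E mulgVK.
- case=> r; rewrite inE => /andP[Hr Hzr] [-> ->]; split; first by rewrite Hzr Hr.
  by rewrite mulgK.
Qed.

Lemma diff_countE (gT : finGroupType) (R : {set gT * gT}) z :
  z != 1 -> diff_count R z = rrinv_coef R z.
Proof.
move=> nz; rewrite /diff_count /rrinv_coef; apply: eq_card => -[p1 p2].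
rewrite !inE /=; case: (eqVneq p1 p2) => [->|//].
by rewrite mulgV eq_sym (negbTE nz) !andbF.
Qed.

Lemma card_imset_cond (T U : finType) (f : T -> U) (S : {set T}) (Q : pred U) :
  injective f -> #|[set r in f @: S | Q r]| = #|[set x in S | Q (f x)]|.
Proof.
move=> finj; rewrite -[RHS](card_imset _ finj); apply: eq_card => r.
rewrite inE; apply/andP/imsetP.
- by case=> /imsetP[x Hx ->] Hq; exists x; rewrite // inE Hx.
- by case=> x; rewrite inE => /andP[Hx Hq] ->; rewrite imset_f.
Qed.

Lemma card_condl (T : finType) (S : {set T}) (c : bool) (P : pred T) :
  #|[set x in S | c && P x]| = (c * #|[set x in S | P x]|)%N.
Proof.
case: c; first by rewrite mul1n.
rewrite mul0n; apply/eqP; rewrite cards_eq0; apply/eqP/setP => x.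
by rewrite !inE andbF.
Qed.

Lemma card_condr (T : finType) (S : {set T}) (c : bool) (P : pred T) :
  #|[set x in S | P x && c]| = (c * #|[set x in S | P x]|)%N.
Proof.
rewrite -card_condl; apply: eq_card => x; by rewrite !inE (andbC c).
Qed.

Lemma card_eq1 (T : finType) (S : {set T}) (c : T) :
  #|[set x in S | x == c]| = (c \in S).
Proof.
case: (boolP (c \in S)) => Hc.
  rewrite (_ : [set x in S | x == c] = [set c]) ?cards1 //; apply/setP => x; rewrite !inE.
  by case: eqP => [->|]; rewrite ?Hc ?andbF ?andbT.
rewrite (_ : [set x in S | x == c] = set0) ?cards0 //; apply/setP => x; rewrite !inE.
by case: eqP => [->|]; rewrite ?(negbTE Hc) ?andbF.
Qed.

Lemma eq_mulL (gT : finGroupType) (u x y : gT) : (u * x == y) = (x == u^-1 * y).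
Proof. by apply/eqP/eqP => [<-|->]; rewrite ?mulKg ?mulKVg. Qed.

Lemma eq_mulR (gT : finGroupType) (u x y : gT) : (u * x == y) = (u == y * x^-1).
Proof. by apply/eqP/eqP => [<-|->]; rewrite ?mulgK ?mulgVK. Qed.

Lemma card_shift (gT : finGroupType) (h v c : gT) :
  v \in <[h]> -> c \in <[h]> ->
  #|[set x in <[h]> :\ c | v * x \in <[h]> :\ c]| = (#[h] - 1 - (v != 1%g))%N.
Proof.
move=> Hv Hc.
rewrite (_ : [set x in <[h]> :\ c | v * x \in <[h]> :\ c] = <[h]> :\: [set c; v^-1 * c]).
  rewrite cardsD (setIidPr _); last first.
    by apply/subsetP => x; rewrite !inE => /orP[]/eqP->; rewrite ?groupM ?groupV.
  rewrite cards2 -orderE eq_sym eq_mulR mulgV eq_invg1.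
  by case: (v == 1); rewrite /= ?subn0 -?subnDA.
apply/setP => x; rewrite !inE groupMl // -eq_mulL.
by case: (x \in <[h]>); rewrite ?andbF // !andbT negb_or.
Qed.

Lemma mem_imset_l (T U : finType) (c : T) (S : {set U}) p :
  (p \in [set (c, x) | x in S]) = (p.1 == c) && (p.2 \in S).
Proof.
apply/imsetP/andP => [[x Hx ->]|[/eqP E H]]; first by split.
by exists p.2 => //; case: p E H => /= ? ? ->.
Qed.

Lemma mem_imset_r (T U : finType) (c : T) (S : {set U}) p :
  (p \in [set (x, c) | x in S]) = (p.1 \in S) && (p.2 == c).
Proof.
apply/imsetP/andP => [[x Hx ->]|[H /eqP E]]; first by split.
by exists p.1 => //; case: p E H => /= ? ? ->.
Qed.

Lemma card_or (T : finType) (S : {set T}) (P Q : pred T) :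
  (forall x, ~~ (P x && Q x)) ->
  #|[set x in S | P x || Q x]| = (#|[set x in S | P x]| + #|[set x in S | Q x]|)%N.
Proof.
move=> PQ.
have -> : [set x in S | P x || Q x] = [set x in S | P x] :|: [set x in S | Q x].
  by apply/setP => x; rewrite !inE andb_orr.
rewrite cardsU (_ : _ :&: _ = set0) ?cards0 ?subn0 //; apply/setP => x.
by rewrite !inE andbACA andbb (negbTE (PQ x)) andbF.
Qed.

Lemma card_setU_cond (T : finType) (A B : {set T}) (Q : pred T) :
  [disjoint A & B] ->
  #|[set r in A :|: B | Q r]| = (#|[set r in A | Q r]| + #|[set r in B | Q r]|)%N.
Proof.
move=> dAB.
have -> : [set r in A :|: B | Q r] = [set r in A | Q r] :|: [set r in B | Q r].
  by apply/setP => r; rewrite !inE andb_orl.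
rewrite cardsU (_ : _ :&: _ = set0) ?cards0 ?subn0 //; apply/setP => r.
have := disjoint_setI0 dAB => /setP/(_ r); rewrite !inE => E.
by rewrite andbACA E.
Qed.

Lemma count_R (gT : finGroupType) (h : gT) (a b : nat) (u v : gT) :
  u \in <[h]> -> v \in <[h]> ->
  #|[set r in [set (h ^+ a, x) | x in <[h]> :\ h ^+ b]
              :|: [set (x, h ^+ b) | x in <[h]> :\ h ^+ b]
       | (u, v) * r \in [set (h ^+ a, x) | x in <[h]> :\ h ^+ b]
              :|: [set (x, h ^+ b) | x in <[h]> :\ h ^+ b]]| =
  ((u == 1%g) * (#[h] - 1 - (v != 1%g)) + ((u * h ^+ a)%g != h ^+ b) * (v != 1%g)
   + (v != 1%g) * (h ^+ a != (u * h ^+ b)%g) + (v == 1%g) * (#[h] - 1 - (u != 1%g)))%N.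
Proof.
move=> Hu Hv.
set S := <[h]> :\ h ^+ b.
have hS : forall x, x \in <[h]> -> (x \in S) = (x != h ^+ b).
  by move=> x Hx; rewrite !inE Hx andbT.
have dAB : [disjoint [set (h ^+ a, x) | x in S] & [set (x, h ^+ b) | x in S]].
  apply/pred0P => p /=; rewrite mem_imset_l mem_imset_r.
  by rewrite /S !inE; case: (p.2 == h ^+ b); rewrite /= ?andbF.
rewrite card_setU_cond //.
rewrite !card_imset_cond; last by move=> x y [].
  2: by move=> x y [].
under eq_finset => x do rewrite in_setU mem_imset_l mem_imset_r /=.
rewrite card_or; last first.
  by move=> x; rewrite /S !inE; case: (v * x == h ^+ b); rewrite /= ?andbF.
rewrite addnC; under eq_finset => x do rewrite in_setU mem_imset_l mem_imset_r /=.
rewrite card_or; last first.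
  by move=> x; rewrite /S !inE; case: (v * h ^+ b == h ^+ b); rewrite /= ?andbF.
rewrite card_condr card_condr card_condl card_condl.
under eq_finset => x do rewrite eq_mulL.
rewrite card_eq1.
rewrite (_ : #|[set x in S | v * x == h ^+ b]| = (v^-1 * h ^+ b \in S)); last by under eq_finset => x do rewrite eq_mulL; exact: card_eq1.
rewrite /S !card_shift ?mem_cycle // -/S.
have hh : forall i, h ^+ i \in <[h]> by move=> i; apply: mem_cycle.
rewrite !hS ?groupM ?groupV ?hh //.
rewrite (eq_mulR _ v) (eq_mulR _ u (h ^+ a) (h ^+ a)) (eq_mulR _ v^-1) !mulgV eq_invg1.
rewrite [u^-1 * _ == _]eq_sym -eq_mulL [u * _ == _]eq_sym.
by rewrite [LHS]addnC !addnA.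
Qed.

Lemma sum_ind (n k : nat) : (k < n)%N ->
  (\sum_(1 <= j < n) b2z (k == j))%R = b2z (k != 0%N).
Proof.
move=> kn; case: (posnP k) => [->|kp].
  by rewrite big1_seq //= => j /=; rewrite mem_index_iota => /andP[j1 _]; case: j j1.
rewrite (big_cat_nat (n := k) kp (ltnW kn)) big1_seq ?add0r; last first.
  by move=> j /=; rewrite mem_index_iota => /andP[_ jk]; rewrite (gtn_eqF jk).
rewrite big_ltn // eqxx big1_seq ?addr0 /b2z ?(gtn_eqF kp) //.
by move=> j /=; rewrite mem_index_iota => /andP[jk _]; rewrite (ltn_eqF jk).
Qed.

Lemma sum_pow (gT : finGroupType) (h w u v : gT) (n : nat) : #[h] = n -> v \in <[h]> ->
  (\sum_(1 <= j < n) b2z ((u, v) == (w, h ^+ j)%g))%R = b2z ((u == w) && (v != 1%g)).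
Proof.
move=> hn Hv; case/cyclePmin: Hv => k; rewrite hn => kn ->.
case: (eqVneq u w) => [->|neq]; last first.
  by rewrite big1 // => j _; rewrite xpair_eqE (negbTE neq).
rewrite (eq_big_nat _ _ (F2 := fun j => b2z (k == j))); last first.
  by move=> j /andP[_ jn]; rewrite xpair_eqE eqxx /= eq_expg_mod_order hn !modn_small.
rewrite sum_ind // -[X in (_ ^+ k != X)](expg0 h) eq_expg_mod_order hn.
by rewrite mod0n modn_small.
Qed.

Lemma arith (n : nat) (U V P Q : bool) : (1 < n)%N -> (U -> ~~ P && ~~ Q) ->
  (Posz (U * (n - 1 - ~~ V) + ~~ P * ~~ V + ~~ V * ~~ Q + V * (n - 1 - ~~ U))%N =
  ((2 * n%:Z - 2 - (n%:Z - 2) - n%:Z + 2%:Z) * b2z (U && V) +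
   (n%:Z - 2 - 2%:Z) * b2z V + (n%:Z - 2%:Z) * b2z (U && true) +
   2%:Z * b2z true +
   (n%:Z - 2 - (n%:Z - 2)) * (b2z (P && V) + b2z (Q && V)) +
   (1%:Z - 2%:Z) * (b2z (P && ~~ V) + b2z (Q && ~~ V)))%R).
Proof.
move=> n1; rewrite /b2z.
case: U; case: V; case: P; case: Q => //= _; lia.
Qed.

Lemma arith2 (n : nat) (U V P Q : bool) : (1 < n)%N -> (U -> ~~ P && ~~ Q) ->
  (Posz (U * (n - 1 - ~~ V) + ~~ P * ~~ V + ~~ V * ~~ Q + V * (n - 1 - ~~ U))%N =
  ((2 * n%:Z - 2 - (n%:Z - 2) - n%:Z + 2%:Z) * b2z (U && V) +
   (n%:Z - 2 - 2%:Z) * b2z V + (n%:Z - 2%:Z) * b2z (U && true) +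
   2%:Z * b2z true +
   (n%:Z - 2 - (n%:Z - 2)) * (b2z (Q && V) + b2z (P && V)) +
   (1%:Z - 2%:Z) * (b2z (Q && ~~ V) + b2z (P && ~~ V)))%R).
Proof.
move=> n1 H; rewrite [(b2z (Q && V) + _)%R]addrC [(b2z (Q && ~~ V) + _)%R]addrC.
exact: arith.
Qed.

Theorem proposition1 (gT : finGroupType) (h : gT) (n a b : nat) :
  (2 <= n)%N -> #[h] = n -> (a < n)%N -> (b < n)%N ->
  let ell := natdist a b in
  let R : {set gT * gT} :=
    [set (h ^+ a, x) | x in <[h]> :\ h ^+ b]
    :|: [set (x, h ^+ b) | x in <[h]> :\ h ^+ b] in
  (ell != 0%N ->
     is_PDPDS h h n n ell R (2 * n%:Z - 2)%R (n%:Z - 2)%R n%:Z (n%:Z - 2)%R 2%:Z 1%:Z)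
  /\ (ell = 0%N -> is_DPDS h h n n R (2 * n - 2) (n - 2) (n - 2) 2).
Proof.
move=> n2 hn an bn ell R.
have hh : forall i, h ^+ i \in <[h]> := mem_cycle h.
have RP : forall p, (p \in R) = ((p.1 == h ^+ a) && (p.2 \in <[h]> :\ h ^+ b))
    || ((p.1 \in <[h]> :\ h ^+ b) && (p.2 == h ^+ b)).
  by move=> p; rewrite /R in_setU mem_imset_l mem_imset_r.
have Rsub : R \subset setX <[h]> <[h]>.
  apply/subsetP => -[x y]; rewrite RP /= !inE.
  by case/orP => [/andP[/eqP-> /andP[_ ->]]|/andP[/andP[_ ->] /eqP->]]; rewrite hh.
have cnt : forall u v, u \in <[h]> -> v \in <[h]> ->
  rrinv_coef R (u, v) =
  ((u == 1%g) * (n - 1 - (v != 1%g)) + ((u * h ^+ a)%g != h ^+ b) * (v != 1%g)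
   + (v != 1%g) * (h ^+ a != (u * h ^+ b)%g) + (v == 1%g) * (n - 1 - (u != 1%g)))%N.
  by move=> u v Hu Hv; rewrite rrinv_coefE -hn; exact: count_R.
have cardR : #|R| = (2 * n - 2)%N.
  have <- : rrinv_coef R (1, 1) = #|R|.
    by rewrite rrinv_coefE; apply: eq_card => r; rewrite !inE mul1g andbb.
  rewrite cnt ?group1 // !eqxx /= !mul1g !muln0 !mul0n !mul1n !subn0. lia.
split; last first.
  move=> ell0; have ab : a = b by move: ell0; rewrite /ell /natdist; lia.
  subst a; split => //.
  move=> [u v]; rewrite in_setX => /andP[Hu Hv] nz.
  rewrite diff_countE // cnt //.
  have E1 : ((u * h ^+ b)%g == h ^+ b) = (u == 1) by rewrite eq_mulR mulgV.
  have E2 : (h ^+ b == (u * h ^+ b)%g) = (u == 1) by rewrite eq_sym E1.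
  rewrite E1 E2 /=; move: nz; rewrite xpair_eqE.
  by case: (u == 1); case: (v == 1) => //= _; rewrite ?muln0 ?mul0n ?muln1 ?mul1n; lia.
move=> ell0.
have ell_lt : (ell < n)%N by rewrite /ell /natdist; lia.
have ell_gt : (0 < ell)%N by rewrite lt0n.
have e1 : h ^+ ell != 1.
  by rewrite -order_dvdn hn; apply/negP => /(dvdn_leq ell_gt); rewrite leqNgt ell_lt.
have Hell : ((h ^+ b * (h ^+ a)^-1 == h ^+ ell) && (h ^+ a * (h ^+ b)^-1 == (h ^+ ell)^-1))
         || ((h ^+ b * (h ^+ a)^-1 == (h ^+ ell)^-1) && (h ^+ a * (h ^+ b)^-1 == h ^+ ell)).
  case: (leqP a b) => ab.
    have -> : ell = (b - a)%N by rewrite /ell /natdist; lia.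
    have E : h ^+ b * (h ^+ a)^-1 = h ^+ (b - a) by rewrite -{1}(subnK ab) expgD mulgK.
    by rewrite E -E invMg invgK !eqxx.
  have -> : ell = (a - b)%N by rewrite /ell /natdist; lia.
  have E : h ^+ a * (h ^+ b)^-1 = h ^+ (a - b) by rewrite -{1}(subnK (ltnW ab)) expgD mulgK.
  by rewrite E -E invMg invgK !eqxx orbT.
split => //.
  by rewrite cardR; lia.
move=> [u v]; rewrite in_setX => /andP[Hu Hv].
rewrite cnt // big_split /= !sum_pow // !xpair_eqE !in_setX Hu Hv /= !inE.
have E1 : ((u * h ^+ a)%g == h ^+ b) = (u == h ^+ b * (h ^+ a)^-1) by rewrite eq_mulR.
have E2 : (h ^+ a == (u * h ^+ b)%g) = (u == h ^+ a * (h ^+ b)^-1) by rewrite eq_sym eq_mulR.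
rewrite E1 E2.
have e2 : (h ^+ ell)^-1 != 1 by rewrite eq_invg1.
have cU : forall c, c != 1 -> u == 1 -> u != c.
  by move=> c c1 /eqP->; rewrite eq_sym.
move: Hell => /orP[/andP[/eqP-> /eqP->]|/andP[/eqP-> /eqP->]].
  apply: arith => // U; rewrite !cU //.
apply: arith2 => // U; rewrite !cU //.
Qed.
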